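(* Let $d\ge1$ and $x,y,u,v\in\mathbb{R}^d_{>0}$, and set $a^\pm:=s^\pm(x,y)$, $b^\pm:=s^\pm(u,v)$. Then there exist $y^*,v^*\in\mathbb{R}^d_{>0}$ such that \[ F_d(x,y^*;u,v^* )\ge F_d(x,y;u,v),\qquad s^\pm(x,y^* )=s^\pm(x,y),\qquad s^\pm(u,v^* )=s^\pm(u,v), \] and for every $1\le i\le d$, $\frac{y^*_i}{x_i}\in\{a^-,a^+\}$ and $\frac{v^*_i}{u_i}\in\{b^-,b^+\}$.
   Context: For $x,y\in\mathbb{R}^d_{>0}$ define $s^+(x,y)=\max_i \frac{y_i}{x_i}$ and $s^-(x,y)=\min_i\frac{y_i}{x_i}$ (the statement $s^\pm(\cdot)=s^\pm(\cdot)$ means both the max and the min agree). Define $F_d:(\mathbb{R}^d_{>0})^4\to\mathbb{R}_{>0}$ by $F_d(x,y;u,v)=\frac{(x\cdot u)(y\cdot v)}{(x\cdot v)(y\cdot u)}$, where $\cdot$ is the standard Euclidean dot product. *)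

(* Defs.v *)
From mathcomp Require Import all_boot all_order all_algebra.
Set Implicit Arguments. Unset Strict Implicit. Unset Printing Implicit Defensive.
Import Order.TTheory GRing.Theory Num.Theory.
Local Open Scope ring_scope.

(* Vectors in R^d are functions 'I_d -> R; d >= 1 is encoded as d = n.+1. *)

Definition dotp (R : realFieldType) (d : nat) (x y : 'I_d -> R) : R :=
  \sum_(i < d) x i * y i.

Definition posvec (R : realFieldType) (d : nat) (x : 'I_d -> R) : Prop :=
  forall i, 0 < x i.

Definition splus (R : realFieldType) (n : nat) (x y : 'I_n.+1 -> R) : R :=
  \big[Num.max/(y ord0 / x ord0)]_(i < n.+1) (y i / x i).

Definition sminus (R : realFieldType) (n : nat) (x y : 'I_n.+1 -> R) : R :=
  \big[Num.min/(y ord0 / x ord0)]_(i < n.+1) (y i / x i).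

Definition Fd (R : realFieldType) (d : nat) (x y u v : 'I_d -> R) : R :=
  (dotp x u * dotp y v) / (dotp x v * dotp y u).

(* Main.v *)
Require Import Defs.
From mathcomp Require Import all_boot all_order all_algebra.
From mathcomp Require Import ring lra.
Import Order.TTheory GRing.Theory Num.Theory.
Local Open Scope ring_scope.

Section Helpers.
Context {R : realFieldType}.

Lemma bmax_ub n (f : 'I_n.+1 -> R) j : f j <= \big[Num.max/f ord0]_(i < n.+1) f i.
Proof.
rewrite (bigD1 j) //= le_max lexx //.
Qed.

Lemma bmax_lub n (f : 'I_n.+1 -> R) b : (forall i, f i <= b) ->
  \big[Num.max/f ord0]_(i < n.+1) f i <= b.
Proof.
move=> H; apply: (big_ind (fun m => m <= b)) => //.
by move=> p q Hp Hq; rewrite ge_max Hp Hq.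
Qed.

Lemma bmax_ex n (f : 'I_n.+1 -> R) : exists i, \big[Num.max/f ord0]_(i < n.+1) f i = f i.
Proof.
apply: (big_ind (fun m => exists i, m = f i)); first by exists ord0.
  move=> p q [i ->] [j ->]; case: (leP (f i) (f j)) => H.
    by exists j.
  by exists i.
by move=> i _; exists i.
Qed.

Lemma bmin_lb n (f : 'I_n.+1 -> R) j : \big[Num.min/f ord0]_(i < n.+1) f i <= f j.
Proof.
rewrite (bigD1 j) //= ge_min lexx //.
Qed.

Lemma bmin_glb n (f : 'I_n.+1 -> R) b : (forall i, b <= f i) ->
  b <= \big[Num.min/f ord0]_(i < n.+1) f i.
Proof.
move=> H; apply: (big_ind (fun m => b <= m)) => //.
by move=> p q Hp Hq; rewrite le_min Hp Hq.
Qed.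

Lemma bmin_ex n (f : 'I_n.+1 -> R) : exists i, \big[Num.min/f ord0]_(i < n.+1) f i = f i.
Proof.
apply: (big_ind (fun m => exists i, m = f i)); first by exists ord0.
  move=> p q [i ->] [j ->]; case: (leP (f i) (f j)) => H.
    by exists i.
  by exists j.
by move=> i _; exists i.
Qed.

Lemma key d (w p al : 'I_d -> R) (lo hi : R) (imin imax : 'I_d) :
  (forall i, lo <= al i <= hi) -> al imin = lo -> al imax = hi ->
  exists al' : 'I_d -> R, (forall i, al' i = lo \/ al' i = hi) /\
    al' imin = lo /\ al' imax = hi /\
    (\sum_i p i * al i) * (\sum_i w i * al' i) <=
    (\sum_i p i * al' i) * (\sum_i w i * al i).
Proof.
move=> Hb Hmin Hmax.
set Pa := \sum_i p i * al i; set Wa := \sum_i w i * al i.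
pose c i := p i * Wa - Pa * w i.
pose al' i := if i == imin then lo else if i == imax then hi
              else if 0 <= c i then hi else lo.
exists al'; split.
  move=> i; rewrite /al'; case: (i == imin); first by left.
  case: (i == imax); first by right.
  by case: (0 <= c i); [right|left].
split; first by rewrite /al' eqxx.
split.
  rewrite /al'; case: eqP => [E|_]; last by rewrite eqxx.
  by rewrite -Hmin -Hmax E.
have Hc : \sum_i c i * al i = 0.
  rewrite /c; under eq_bigr => i _ do rewrite mulrBl.
  rewrite sumrB; under eq_bigr => i _ do rewrite mulrAC.
  rewrite -mulr_suml -/Pa.
  under [X in _ - X = _]eq_bigr => i _ do rewrite -mulrA.
  by rewrite -mulr_sumr -/Wa mulrC subrr.
have Hle : \sum_i c i * al i <= \sum_i c i * al' i.
  apply: ler_sum => i _; rewrite /al'.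
  case: eqP => [->|_]; first by rewrite Hmin.
  case: eqP => [->|_]; first by rewrite Hmax.
  have /andP [H1 H2] := Hb i.
  case: (lerP 0 (c i)) => Hci; first by rewrite ler_wpM2l.
  by rewrite ler_wnM2l // ltW.
have E : \sum_i c i * al' i =
   (\sum_i p i * al' i) * Wa - Pa * (\sum_i w i * al' i).
  rewrite /c; under eq_bigr => i _ do rewrite mulrBl.
  rewrite sumrB; under eq_bigr => i _ do rewrite mulrAC.
  rewrite -mulr_suml.
  under [X in _ - X = _]eq_bigr => i _ do rewrite -mulrA.
  by rewrite -mulr_sumr.
rewrite -subr_ge0 -E; by rewrite Hc in Hle.
Qed.

Lemma sum_pos n (f : 'I_n.+1 -> R) : (forall i, 0 < f i) -> 0 < \sum_(i < n.+1) f i.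
Proof.
move=> H; apply: (lt_le_trans (H ord0)); rewrite big_ord_recl lerDl.
by apply: sumr_ge0 => i _; exact: ltW.
Qed.

Lemma divle (a b c d : R) : 0 < b -> 0 < d -> a * d <= c * b -> a / b <= c / d.
Proof.
move=> hb hd h; rewrite ler_pdivrMr // mulrAC ler_pdivlMr //.
Qed.

End Helpers.
Arguments bmax_ub {R n} f j.
Arguments bmin_lb {R n} f j.
Arguments bmax_ex {R n} f.
Arguments bmin_ex {R n} f.
Arguments bmax_lub {R n f} b.
Arguments bmin_glb {R n f} b.

Theorem mainTheorem6 (R : realFieldType) (n : nat) (x y u v : 'I_n.+1 -> R) :
  posvec x -> posvec y -> posvec u -> posvec v ->
  exists ys vs : 'I_n.+1 -> R,
    posvec ys /\ posvec vs /\
    Fd x y u v <= Fd x ys u vs /\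
    (splus x ys = splus x y /\ sminus x ys = sminus x y) /\
    (splus u vs = splus u v /\ sminus u vs = sminus u v) /\
    (forall i : 'I_n.+1,
       (ys i / x i = sminus x y \/ ys i / x i = splus x y) /\
       (vs i / u i = sminus u v \/ vs i / u i = splus u v)).
Proof.
move=> px py pu pv.
pose al i := y i / x i. pose be i := v i / u i. pose w i := x i * u i.
have alp : forall i, 0 < al i by move=> i; rewrite divr_gt0.
have bep : forall i, 0 < be i by move=> i; rewrite divr_gt0.
have wp : forall i, 0 < w i by move=> i; rewrite mulr_gt0.
have [imax Hmax] := bmax_ex al.
have [imin Hmin] := bmin_ex al.
have [jmax Jmax] := bmax_ex be.
have [jmin Jmin] := bmin_ex be.
change (\big[Num.max/al ord0]_(i < n.+1) al i) with (splus x y) in Hmax.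
change (\big[Num.min/al ord0]_(i < n.+1) al i) with (sminus x y) in Hmin.
change (\big[Num.max/be ord0]_(i < n.+1) be i) with (splus u v) in Jmax.
change (\big[Num.min/be ord0]_(i < n.+1) be i) with (sminus u v) in Jmin.
have alb : forall i, sminus x y <= al i <= splus x y.
  move=> i; rewrite -/(splus x y).
  by rewrite (bmin_lb al i) (bmax_ub al i).
have beb : forall i, sminus u v <= be i <= splus u v.
  move=> i; by rewrite (bmin_lb be i) (bmax_ub be i).
have [al' [al'v [al'min [al'max h1]]]] :=
  @key R _ w (fun i => w i * be i) al _ _ _ _ alb (Logic.eq_sym Hmin) (Logic.eq_sym Hmax).
have [be' [be'v [be'min [be'max h2]]]] :=
  @key R _ w (fun i => w i * al' i) be _ _ _ _ beb (Logic.eq_sym Jmin) (Logic.eq_sym Jmax).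
have al'p : forall i, 0 < al' i.
  move=> i; have [->|->] := al'v i; first by rewrite Hmin.
  by rewrite Hmax.
have be'p : forall i, 0 < be' i.
  move=> i; have [->|->] := be'v i; first by rewrite Jmin.
  by rewrite Jmax.
pose ys i := al' i * x i. pose vs i := be' i * u i.
have ysx : forall i, ys i / x i = al' i.
  by move=> i; rewrite /ys mulfK // gt_eqF.
have vsu : forall i, vs i / u i = be' i.
  by move=> i; rewrite /vs mulfK // gt_eqF.
exists ys, vs.
split; first by move=> i; rewrite /ys mulr_gt0.
split; first by move=> i; rewrite /vs mulr_gt0.
split; last first.
  split.
    split.
      apply: le_anti; apply/andP; split.
        apply: (@bmax_lub R n (fun i => ys i / x i)) => i; rewrite /= ysx; have [->|->] := al'v i => //.
        by case/andP: (alb imin) => P1 P2; exact: le_trans P1 P2.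
      by apply: (le_trans _ (bmax_ub (fun i => ys i / x i) imax)); rewrite /= ysx al'max.
    apply: le_anti; apply/andP; split.
      by apply: le_trans (bmin_lb (fun i => ys i / x i) imin) _; rewrite /= ysx al'min.
    apply: (@bmin_glb R n (fun i => ys i / x i)) => i; rewrite /= ysx; have [->|->] := al'v i => //.
    by case/andP: (alb imax) => P1 P2; exact: le_trans P1 P2.
  split.
    split.
      apply: le_anti; apply/andP; split.
        apply: (@bmax_lub R n (fun i => vs i / u i)) => i; rewrite /= vsu; have [->|->] := be'v i => //.
        by case/andP: (beb jmin) => P1 P2; exact: le_trans P1 P2.
      by apply: (le_trans _ (bmax_ub (fun i => vs i / u i) jmax)); rewrite /= vsu be'max.
    apply: le_anti; apply/andP; split.
      by apply: le_trans (bmin_lb (fun i => vs i / u i) jmin) _; rewrite /= vsu be'min.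
    apply: (@bmin_glb R n (fun i => vs i / u i)) => i; rewrite /= vsu; have [->|->] := be'v i => //.
    by case/andP: (beb jmax) => P1 P2; exact: le_trans P1 P2.
  by move=> i; rewrite ysx vsu; split.
have yE : forall i, y i = al i * x i.
  by move=> i; rewrite /al divfK // gt_eqF.
have vE : forall i, v i = be i * u i.
  by move=> i; rewrite /be divfK // gt_eqF.
have e1 : dotp x u = \sum_i w i by [].
have e2 : dotp y v = \sum_i w i * be i * al i.
  by apply: eq_bigr => i _; rewrite yE vE /w; ring.
have e3 : dotp x v = \sum_i w i * be i.
  by apply: eq_bigr => i _; rewrite vE /w; ring.
have e4 : dotp y u = \sum_i w i * al i.
  by apply: eq_bigr => i _; rewrite yE /w; ring.
have e5 : dotp ys vs = \sum_i w i * al' i * be' i.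
  by apply: eq_bigr => i _; rewrite /ys /vs /w; ring.
have e6 : dotp x vs = \sum_i w i * be' i.
  by apply: eq_bigr => i _; rewrite /vs /w; ring.
have e7 : dotp ys u = \sum_i w i * al' i.
  by apply: eq_bigr => i _; rewrite /ys /w; ring.
have e8 : \sum_i w i * be i * al' i = \sum_i w i * al' i * be i.
  by apply: eq_bigr => i _; ring.
rewrite /Fd e1 e2 e3 e4 e5 e6 e7.
rewrite e8 in h1.
set S := \sum_i w i in e1 *.
set N := \sum_i w i * be i * al i in h1 *.
set N1 := \sum_i w i * al' i * be i in h1 h2 *.
set N2 := \sum_i w i * al' i * be' i in h2 *.
set A := \sum_i w i * al i in h1 *.
set A1 := \sum_i w i * al' i in h1 *.
set B := \sum_i w i * be i in h2 *.
set B1 := \sum_i w i * be' i in h2 *.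
have Sp : 0 < S by apply: sum_pos.
have Ap : 0 < A by apply: sum_pos => i; rewrite mulr_gt0.
have A1p : 0 < A1 by apply: sum_pos => i; rewrite mulr_gt0.
have Bp : 0 < B by apply: sum_pos => i; rewrite mulr_gt0.
have B1p : 0 < B1 by apply: sum_pos => i; rewrite mulr_gt0.
apply: divle; rewrite ?mulr_gt0 //.
have k1 : S * B1 * (N * A1) <= S * B1 * (N1 * A) by rewrite ler_pM2l ?mulr_gt0.
have k2 : S * A * (N1 * B1) <= S * A * (N2 * B) by rewrite ler_pM2l ?mulr_gt0.
have -> : S * N * (B1 * A1) = S * B1 * (N * A1) by ring.
have -> : S * N2 * (B * A) = S * A * (N2 * B) by ring.
apply: (le_trans k1); have -> : S * B1 * (N1 * A) = S * A * (N1 * B1) by ring.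
exact: k2.
Qed.
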